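(* If $G\neq K_4$ is a connected, claw-free cubic graph, then there exists a vertex cover $P$ of $G$ such that every triangle of $G$ contains exactly two vertices from $P$.
   Context: A graph is claw-free if it has no induced subgraph isomorphic to $K_{1,3}$; it is cubic if every vertex has degree $3$. A vertex cover is a set of vertices meeting every edge. *)

(* Defs.v *)
From mathcomp Require Import all_boot.
Set Implicit Arguments. Unset Strict Implicit. Unset Printing Implicit Defensive.

Definition simple_graph (T : finType) (e : rel T) : Prop :=
  symmetric e /\ irreflexive e.

Definition neighbours (T : finType) (e : rel T) (x : T) : {set T} :=
  [set y | e x y].

Definition cubic (T : finType) (e : rel T) : Prop :=
  forall x : T, #|neighbours e x| = 3.

Definition connected_graph (T : finType) (e : rel T) : Prop :=
  forall x y : T, connect e x y.

Definition claw_free (T : finType) (e : rel T) : Prop :=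
  ~ exists x a b c : T,
      [/\ e x a, e x b, e x c & [/\ a != b, a != c, b != c &
          [/\ ~~ e a b, ~~ e a c & ~~ e b c]]].

Definition is_K4 (T : finType) (e : rel T) : Prop :=
  #|T| = 4 /\ forall x y : T, x != y -> e x y.

Definition vertex_cover (T : finType) (e : rel T) (P : {set T}) : Prop :=
  forall x y : T, e x y -> (x \in P) || (y \in P).

(* A triangle: three pairwise adjacent vertices (distinct, since e is irreflexive). *)
Definition triangle (T : finType) (e : rel T) (a b c : T) : Prop :=
  [/\ e a b, e a c & e b c].

(* Main.v *)
Require Import Defs.
From mathcomp Require Import all_boot.
Set Implicit Arguments. Unset Strict Implicit. Unset Printing Implicit Defensive.

Lemma closed_connect_sub (T : finType) (r : rel T) (S : {set T}) x y :
  (forall u v, u \in S -> r u v -> v \in S) -> x \in S -> connect r x y -> y \in S.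
Proof.
move=> HS Hx /connectP [p Hp ->]; elim: p x Hx Hp => [|z p IH] x Hx //=.
by case/andP => Hxz Hp; apply: (IH z) => //; apply: HS Hxz.
Qed.

Section Abstract.
Variables (T : finType) (e : rel T) (cls : T -> {set T}) (good : T -> Prop).
Hypothesis Hirr : irreflexive e.
Hypothesis Hsym : symmetric e.
Hypothesis Hcls0 : forall x, x \in cls x.
Hypothesis Hcls2 : forall x y, y \in cls x -> cls y = cls x.
Hypothesis H3 : forall y, exists y', [/\ y' \in cls y, y' != y & good y'].
Hypothesis H4 : forall u w1 w2, e u w1 -> e u w2 -> w1 \notin cls u -> w2 \notin cls u -> w1 = w2.

Definition valid (A Q : {set T}) :=
  [/\ Q \subset A, forall x, x \in A -> #|cls x :&: Q| = 1,
      forall x y, x \in Q -> y \in Q -> ~~ e x y & forall x, x \in Q -> good x].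

Definition closedA (A : {set T}) := forall x, x \in A -> cls x \subset A.

Lemma cls_sym x y : y \in cls x -> x \in cls y.
Proof. by move/Hcls2 => ->. Qed.

Lemma extend A u Q2 : closedA A -> u \in A -> good u ->
  valid (A :\: cls u) Q2 -> (forall q, q \in Q2 -> ~~ e u q) ->
  valid A (u |: Q2).
Proof.
move=> HA uA gu [sQ cQ iQ gQ] nadj; split.
- apply/subsetP => x /setU1P [-> //|/(subsetP sQ)].
  by rewrite inE => /andP [].
- move=> x xA; case xc: (x \in cls u).
    rewrite (Hcls2 xc); apply/eqP/cards1P; exists u; apply/setP => w.
    rewrite !inE; apply/idP/idP => [/andP [wc /orP [//|wQ]]|/eqP ->].
      by move: (subsetP sQ w wQ); rewrite inE wc.
    by rewrite Hcls0 eqxx.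
  have xA2 : x \in A :\: cls u by rewrite inE xc xA.
  rewrite -(cQ x xA2); apply: eq_card => w; rewrite !inE.
  case wu: (w == u) => //=; move/eqP: wu => ->.
  case ux: (u \in cls x) => //.
  by rewrite (cls_sym ux) in xc.
- move=> x y /setU1P [->|xQ] /setU1P [->|yQ].
  + by rewrite Hirr.
  + exact: nadj.
  + by rewrite Hsym; apply: nadj.
  + exact: iQ.
- by move=> x /setU1P [->|/gQ].
Qed.

Lemma main_ind n : forall A : {set T}, #|A| <= n -> closedA A ->
  (forall u, u \in A -> good u -> exists Q, valid A Q /\ u \in Q) /\ exists Q, valid A Q.
Proof.
elim: n => [|n IH] A hA cA.
  have A0 : A = set0 by apply: cards0_eq; apply/eqP; rewrite -leqn0.
  split; first by move=> u; rewrite A0 inE.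
  exists set0; split; first by rewrite sub0set.
  - by move=> x; rewrite A0 inE.
  - by move=> x y; rewrite inE.
  - by move=> x; rewrite inE.
have part1 : forall u, u \in A -> good u -> exists Q, valid A Q /\ u \in Q.
  move=> u uA gu.
  set A2 := A :\: cls u.
  have hA2 : #|A2| <= n.
    have : #|A2| < #|A|.
      apply: proper_card; rewrite properE; apply/andP; split.
        by apply/subsetP => x; rewrite inE => /andP [].
      by apply/subsetPn; exists u => //; rewrite inE Hcls0.
    by move=> lt; rewrite -ltnS; apply: leq_trans lt hA.
  have cA2 : closedA A2.
    move=> x; rewrite inE => /andP [xc xA]; apply/subsetP => w wx.
    rewrite inE (subsetP (cA x xA) w wx) andbT.
    apply/negP => wu; move: xc; rewrite -(Hcls2 wu) (Hcls2 wx) Hcls0.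
    by [].
  have [IH1 IH2] := IH A2 hA2 cA2.
  case: (boolP [exists y, (y \in A2) && e u y]) => [/existsP [y /andP [yA2 uy]]|none].
    have [y' [y'c y'y gy']] := H3 y.
    have y'A2 : y' \in A2 by apply: (subsetP (cA2 y yA2)).
    have [Q2 [vQ2 y'Q2]] := IH1 y' y'A2 gy'.
    exists (u |: Q2); split; last by rewrite setU11.
    apply: extend => // q qQ; apply/negP => uq.
    have [sQ cQ _ _] := vQ2.
    have qA2 := subsetP sQ q qQ.
    have yq : q = y.
      apply: (H4 uq uy).
        by move: qA2; rewrite inE => /andP [].
      by move: yA2; rewrite inE => /andP [].
    move: (cQ y yA2) => /eqP /cards1P [z Hz].
    have : y \in cls y :&: Q2 by rewrite inE Hcls0 -yq qQ.
    have : y' \in cls y :&: Q2 by rewrite inE y'c y'Q2.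
    rewrite Hz !inE => /eqP h1 /eqP h2.
    by rewrite h1 h2 eqxx in y'y.
  have [Q2 vQ2] := IH2.
  exists (u |: Q2); split; last by rewrite setU11.
  apply: extend => // q qQ; apply/negP => uq.
  have [sQ _ _ _] := vQ2.
  move/existsP: none; apply; exists q; rewrite uq andbT.
  exact: (subsetP sQ).
split=> //.
case: (set_0Vmem A) => [->|[u uA]].
  exists set0; split; first by rewrite sub0set.
  - by move=> x; rewrite inE.
  - by move=> x y; rewrite inE.
  - by move=> x; rewrite inE.
have [y' [y'c _ gy']] := H3 u.
have [Q [vQ _]] := part1 y' (subsetP (cA u uA) y' y'c) gy'.
by exists Q.
Qed.

End Abstract.
Lemma card3 (T : finType) (a b c : T) : a != b -> a != c -> b != c -> #|[set a; b; c]| = 3.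
Proof. move=> ab ac bc. rewrite -setUA cardsU1 cards2 !inE. rewrite (negbTE ab) (negbTE ac) bc. by []. Qed.
Lemma mem4 (T : finType) (a x z s w : T) : a \in [set x; z; s; w] -> [\/ a = x, a = z, a = s | a = w].
Proof. by rewrite !inE => /orP[/orP[/orP[]|]|] /eqP ->; [apply: Or41|apply: Or42|apply: Or43|apply: Or44]. Qed.
Lemma mem3 (T : finType) (a x z s : T) : a \in [set x; z; s] -> [\/ a = x, a = z | a = s].
Proof. by rewrite !inE => /orP[/orP[]|] /eqP ->; [apply: Or31|apply: Or32|apply: Or33]. Qed.
Lemma quad (T : finType) (e : rel T) (x z s w a b c : T) : irreflexive e -> e s w = false -> e w s = false ->
  a \in [set x; z; s; w] -> b \in [set x; z; s; w] -> c \in [set x; z; s; w] ->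
  e a b -> e a c -> e b c -> (x \in [set a; b; c]) && (z \in [set a; b; c]).
Proof.
move=> Hirr H1 H2.
move=> /mem4 [] -> /mem4 [] -> /mem4 [] ->;
 rewrite ?Hirr ?H1 ?H2 !inE ?eqxx ?orbT //=.
Qed.

Section Graph.
Variables (T : finType) (e : rel T).
Hypothesis Hsg : simple_graph e.
Hypothesis Hcub : cubic e.
Hypothesis Hconn : connected_graph e.
Hypothesis Hcf : claw_free e.
Hypothesis HK4 : ~ is_K4 e.

Let Hsym : symmetric e := Hsg.1.
Let Hirr : irreflexive e := Hsg.2.

Lemma neq_of_e x y : e x y -> x != y.
Proof. by apply: contraTneq => ->; rewrite Hirr. Qed.

Lemma nb3 x a b c y : e x a -> e x b -> e x c -> a != b -> a != c -> b != c ->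
  e x y -> [\/ y = a, y = b | y = c].
Proof.
move=> xa xb xc ab ac bc xy.
have sub : [set a; b; c] \subset neighbours e x.
  by apply/subsetP => w /mem3 [] ->; rewrite inE.
have : [set a; b; c] == neighbours e x by rewrite eqEcard sub card3 // Hcub.
move/eqP => Heq; apply: mem3; by rewrite Heq inE.
Qed.

Lemma N3 x : exists a b c, [/\ e x a, e x b, e x c & [/\ a != b, a != c & b != c]].
Proof.
have := Hcub x; move=> H.
have : 0 < #|neighbours e x| by rewrite H.
case/card_gt0P => a aN.
have : #|neighbours e x :\ a| == 2 by move: H; rewrite (cardsD1 a) aN add1n => [[->]].
case/cards2P => b [c [bc Hbc]].
have bN : b \in neighbours e x :\ a by rewrite Hbc !inE eqxx.
have cN : c \in neighbours e x :\ a by rewrite Hbc !inE eqxx orbT.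
move: bN cN aN; rewrite !inE => /andP [ba xb] /andP [ca xc] xa.
exists a, b, c; split => //; split => //; by rewrite eq_sym.
Qed.

Lemma CF x : exists p q, triangle e x p q.
Proof.
have [a [b [c [xa xb xc [ab ac bc]]]]] := N3 x.
case eab: (e a b); first by exists a, b.
case eac: (e a c); first by exists a, c.
case ebc: (e b c); first by exists b, c.
exfalso; apply: Hcf; exists x, a, b, c; split => //; split => //; split; by rewrite ?eab ?eac ?ebc.
Qed.

Lemma noK x a b c : e x a -> e x b -> e x c -> a != b -> a != c -> b != c ->
  e a b -> e a c -> e b c = false.
Proof.
move=> xa xb xc ab ac bc eab eac; apply/negbTE/negP => ebc.
have xa' := neq_of_e xa; have xb' := neq_of_e xb; have xc' := neq_of_e xc.
set D := [set x; a; b; c].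
have cl : forall u v, u \in D -> e u v -> v \in D.
  move=> u v /mem4 [] -> uv.
  - by case: (nb3 xa xb xc ab ac bc uv) => ->; rewrite !inE eqxx ?orbT.
  - have ax : e a x by rewrite Hsym.
    by case: (nb3 ax eab eac (xb' : x != b) xc' bc uv) => ->; rewrite !inE eqxx ?orbT.
  - have bx : e b x by rewrite Hsym.
    have ba : e b a by rewrite Hsym.
    by case: (nb3 bx ba ebc xa' xc' ac uv) => ->; rewrite !inE eqxx ?orbT.
  - have cx : e c x by rewrite Hsym.
    have ca : e c a by rewrite Hsym.
    have cb : e c b by rewrite Hsym.
    by case: (nb3 cx ca cb xa' xb' ab uv) => ->; rewrite !inE eqxx ?orbT.
have allD : forall y, y \in D.
  move=> y; apply: (closed_connect_sub cl _ (Hconn x y)); by rewrite !inE eqxx.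
apply: HK4; split.
  have -> : #|T| = #|D| by apply/esym; apply: eq_card => y; rewrite allD.
  have -> : D = x |: [set a; b; c] by apply/setP => y; rewrite !inE !orbA.
  rewrite cardsU1 card3 // !inE.
  by rewrite (negbTE xa') (negbTE xb') (negbTE xc').
move=> u v uv.
have eba : e b a by rewrite Hsym.
have eca : e c a by rewrite Hsym.
have ecb : e c b by rewrite Hsym.
have ebx : e b x by rewrite Hsym.
have eax : e a x by rewrite Hsym.
have ecx : e c x by rewrite Hsym.
move: uv (allD u) (allD v) => /[swap] /mem4 [] -> /[swap] /mem4 [] ->; rewrite ?eqxx //.
Qed.

Definition tri_rel : rel T := fun x y => e x y && [exists z, e x z && e y z].
Definition cls x := [set y | connect tri_rel x y].
Definition good q := forall a b c, triangle e a b c -> a \in cls q -> q \in [set a; b; c].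

Lemma tri_sym : symmetric tri_rel.
Proof.
move=> x y; rewrite /tri_rel Hsym; congr (_ && _).
by apply/existsP/existsP => [] [z /andP [h1 h2]]; exists z; rewrite h1 h2.
Qed.

Lemma tri_of x y z : e x y -> e x z -> e y z -> tri_rel x y.
Proof. by move=> xy xz yz; rewrite /tri_rel xy; apply/existsP; exists z; rewrite xz yz. Qed.

Lemma cls0 x : x \in cls x.
Proof. by rewrite inE connect0. Qed.

Lemma cls2 x y : y \in cls x -> cls y = cls x.
Proof.
rewrite inE => xy; apply/setP => w; rewrite !inE.
apply/idP/idP => H; first exact: connect_trans xy H.
by apply: connect_trans H; rewrite (sym_connect_sym tri_sym).
Qed.

Lemma cls_tri x y z : e x y -> e x z -> e y z -> y \in cls x.
Proof. by move=> xy xz yz; rewrite inE; apply: connect1; apply: tri_of xz yz. Qed.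

Lemma cls_sub x (S : {set T}) : (forall u v, u \in S -> tri_rel u v -> v \in S) ->
  x \in S -> cls x \subset S.
Proof. by move=> cl xS; apply/subsetP => y; rewrite inE; apply: closed_connect_sub. Qed.

Lemma H4g u w1 w2 : e u w1 -> e u w2 -> w1 \notin cls u -> w2 \notin cls u -> w1 = w2.
Proof.
move=> uw1 uw2 n1 n2.
have [p [q [up uq pq]]] := CF u.
have pc : p \in cls u := cls_tri up uq pq.
have qc : q \in cls u := cls_tri uq up ltac:(by rewrite Hsym).
have ne : forall a b, a \in cls u -> b \notin cls u -> a != b.
  by move=> a b ha hb; apply: contraNneq hb => <-.
case: (nb3 up uq uw1 (neq_of_e pq) (ne _ _ pc n1) (ne _ _ qc n1) uw2) => // h.
  by rewrite h pc in n2.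
by rewrite h qc in n2.
Qed.

Lemma LL y p q : triangle e y p q ->
  (forall u v, u \in [set y; p; q] -> tri_rel u v -> v \in [set y; p; q]) ->
  forall v, v \in [set y; p; q] -> good v.
Proof.
move=> [yp yq pq] cl v vS a b c [ab ac bc] av.
have sub := cls_sub cl vS.
have aS : a \in [set y; p; q] := subsetP sub a av.
have bc' : b \in cls v by rewrite -(cls2 av); apply: cls_tri ab ac bc.
have cc' : c \in cls v by rewrite -(cls2 av); apply: cls_tri ac ab ltac:(by rewrite Hsym).
have bS := subsetP sub b bc'; have cS := subsetP sub c cc'.
have : [set a; b; c] == [set y; p; q].
  rewrite eqEcard card3 ?(neq_of_e yp) ?(neq_of_e yq) ?(neq_of_e pq) //.
  rewrite card3 ?(neq_of_e ab) ?(neq_of_e ac) ?(neq_of_e bc) // andbT.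
  by apply/subsetP => w /mem3 [] ->.
by move/eqP => ->.
Qed.

Lemma tipC (D : {set T}) x z s v : x \in D -> z \in D ->
  (forall v, e x v -> v \in D) -> (forall v, e z v -> v \in D) ->
  e s x -> e s z -> x != z -> tri_rel s v -> v \in D.
Proof.
move=> xD zD hx hz sx sz xz /andP [sv /existsP [t /andP [st vt]]].
case vD: (v \in D) => //.
have vx : x != v by apply: contraFneq vD => <-.
have vz : z != v by apply: contraFneq vD => <-.
case: (nb3 sx sz sv xz vx vz st) => ht; subst t.
- by rewrite -vD; apply: hx; rewrite Hsym.
- by rewrite -vD; apply: hz; rewrite Hsym.
- by rewrite Hirr in vt.
Qed.

Lemma DL x z s w : triangle e x z s -> triangle e x z w -> w != s -> good x /\ good z.
Proof.
move=> [xz xs zs] [_ xw zw] ws.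
have sw : e s w = false.
  apply: (noK xz xs xw (neq_of_e zs) (neq_of_e zw) ltac:(by rewrite eq_sym) zs zw).
have ws' : e w s = false by rewrite Hsym.
set D := [set x; z; s; w].
have xD : x \in D by rewrite !inE eqxx.
have zD : z \in D by rewrite !inE eqxx ?orbT.
have hx : forall v, e x v -> v \in D.
  by move=> v xv; case: (nb3 xz xs xw (neq_of_e zs) (neq_of_e zw) ltac:(by rewrite eq_sym) xv) => ->;
    rewrite !inE eqxx ?orbT.
have zx : e z x by rewrite Hsym.
have hz : forall v, e z v -> v \in D.
  by move=> v zv; case: (nb3 zx zs zw (neq_of_e xs) (neq_of_e xw) ltac:(by rewrite eq_sym) zv) => ->;
    rewrite !inE eqxx ?orbT.
have cl : forall u v, u \in D -> tri_rel u v -> v \in D.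
  move=> u v /mem4 [] -> uv.
  - by apply: hx; case/andP: uv.
  - by apply: hz; case/andP: uv.
  - by apply: (tipC xD zD hx hz _ _ (neq_of_e xz) uv); rewrite Hsym.
  - by apply: (tipC xD zD hx hz _ _ (neq_of_e xz) uv); rewrite Hsym.
have key : forall q, q \in D -> good x /\ good z -> True by [].
have gen : forall q a b c, q \in D -> triangle e a b c -> a \in cls q ->
    (x \in [set a; b; c]) && (z \in [set a; b; c]).
  move=> q a b c qD [ab ac bc] aq.
  have sub := cls_sub cl qD.
  have bq : b \in cls q by rewrite -(cls2 aq); apply: cls_tri ab ac bc.
  have cq : c \in cls q by rewrite -(cls2 aq); apply: cls_tri ac ab ltac:(by rewrite Hsym).
  apply: (quad Hirr sw ws' (subsetP sub a aq) (subsetP sub b bq) (subsetP sub c cq) ab ac bc).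
split=> a b c tr aq.
  by case/andP: (gen x a b c xD tr aq).
by case/andP: (gen z a b c zD tr aq).
Qed.

Lemma DLgen x s1 s2 w : triangle e x s1 s2 -> tri_rel x w -> w \notin [set x; s1; s2] ->
  (good x /\ good s1) \/ (good x /\ good s2).
Proof.
move=> [xs1 xs2 s12] /andP [xw /existsP [z /andP [xz wz]]] wS.
have n1 : s1 != w by apply: contraNneq wS => <-; rewrite !inE eqxx orbT.
have n2 : s2 != w by apply: contraNneq wS => <-; rewrite !inE eqxx orbT.
case: (nb3 xs1 xs2 xw (neq_of_e s12) n1 n2 xz) => hz; subst z.
- left; apply: (DL (And3 xs1 xs2 s12) (And3 xs1 xw _)); first by rewrite Hsym.
  by rewrite eq_sym.
- right; apply: (DL (And3 xs2 xs1 _) (And3 xs2 xw _)); [by rewrite Hsym|by rewrite Hsym|].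
  by rewrite eq_sym.
- by rewrite Hirr in wz.
Qed.

Lemma H3g y : exists y', [/\ y' \in cls y, y' != y & good y'].
Proof.
have [p [q [yp yq pq]]] := CF y.
have pc : p \in cls y := cls_tri yp yq pq.
have qc : q \in cls y := cls_tri yq yp ltac:(by rewrite Hsym).
have py : p != y by rewrite eq_sym neq_of_e.
have qy : q != y by rewrite eq_sym neq_of_e.
set S := [set y; p; q].
case: (boolP [exists x, exists w, [&& x \in S, tri_rel x w & w \notin S]]) => [|none].
  case/existsP => x /existsP [w /and3P [xS xw wS]].
  case/mem3: xS => hx; subst x.
  - have := DLgen (And3 yp yq pq) xw wS.
    by case=> [[_ g]|[_ g]]; [exists p|exists q].
  - have yp' : e p y by rewrite Hsym.
    have wS' : w \notin [set p; y; q].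
      by apply: contra wS => /mem3 [] ->; rewrite !inE eqxx ?orbT.
    have := DLgen (And3 yp' pq yq) xw wS'.
    by case=> [[g _]|[g _]]; exists p.
  - have qy' : e q y by rewrite Hsym.
    have qp' : e q p by rewrite Hsym.
    have wS' : w \notin [set q; y; p].
      by apply: contra wS => /mem3 [] ->; rewrite !inE eqxx ?orbT.
    have := DLgen (And3 qy' qp' yp) xw wS'.
    by case=> [[g _]|[g _]]; exists q.
have cl : forall u v, u \in S -> tri_rel u v -> v \in S.
  move=> u v uS uv; case vS: (v \in S) => //.
  move/existsP: none; case; exists u; apply/existsP; exists v.
  by rewrite uS uv vS.
exists p; split => //; apply: (LL (And3 yp yq pq) cl).
by rewrite !inE eqxx orbT.
Qed.

End Graph.

Theorem lemma3p11 (T : finType) (e : rel T) :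
  simple_graph e -> cubic e -> connected_graph e -> claw_free e -> ~ is_K4 e ->
  exists P : {set T},
    vertex_cover e P /\
    (forall a b c : T, triangle e a b c -> #|[set a; b; c] :&: P| = 2).
Proof.
move=> Hsg Hcub Hconn Hcf HK4.
have Hsym : symmetric e := Hsg.1.
have Hirr : irreflexive e := Hsg.2.
have [_ [Q [_ cQ iQ gQ]]] :=
  @main_ind T e (cls e) (good e) Hirr Hsym (@cls0 T e) (cls2 Hsg)
    (H3g Hsg Hcub Hconn Hcf HK4) (H4g Hsg Hcub Hcf) #|T| [set: T]
    (max_card _) (fun x _ => subsetT _).
exists (~: Q); split.
  move=> x y xy; rewrite !inE.
  case xQ: (x \in Q); case yQ: (y \in Q) => //=.
  by move: (iQ x y xQ yQ); rewrite xy.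
move=> a b c [ab ac bc].
move: (cQ a (in_setT a)) => /eqP /cards1P [q Hq].
have qa : q \in cls e a :&: Q by rewrite Hq inE.
move: qa; rewrite inE => /andP [qa qQ].
have aq : a \in cls e q by rewrite (cls2 Hsg qa) cls0.
have qS : q \in [set a; b; c] := gQ q qQ a b c (And3 ab ac bc) aq.
have SQ : [set a; b; c] :&: Q = [set q].
  apply/setP => w; rewrite in_set1.
  apply/setIP/eqP => [[wS wQ]|->]; last by split.
  have : w \in cls e a :&: Q.
    rewrite inE wQ andbT.
    case/mem3: wS => ->; first exact: cls0.
      exact: cls_tri ab ac bc.
    by apply: cls_tri ac ab _; rewrite Hsym.
  by rewrite Hq inE => /eqP.
have := cardsID Q [set a; b; c].
rewrite SQ cards1 card3; last first.
- by apply: neq_of_e bc.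
- by apply: neq_of_e ac.
- by apply: neq_of_e ab.
by rewrite setDE => [[<-]].
Qed.
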